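(* Let $(X,\le)$ be a non-empty well-ordered set with least element $x_0$, let $G$ be the free nilpotent group of class two on $X$, and take $A=G$, $K=[G,G]=Z(G)$. For each $y\in X$ let $\psi_y$ be the endomorphism of the abelian group $G/K$ with $\psi_y(x_0K)=yK$ and $\psi_y(xK)=K$ for $x\in X\setminus\{x_0\}$, and let $g\circ_{y}h=g\cdot\psi_y^\uparrow(g)\cdot h\cdot\psi_y^\uparrow(g)^{-1}$ for a lifting $\psi_y^\uparrow:G\to G$ of $\psi_y$ (i.e. $\psi_y^\uparrow(g)K=\psi_y(gK)$). Then $(\circ_y:y\in X)$ is a brace block on $G$, $x_0\circ_y x_0=x_0\cdot y\cdot x_0\cdot y^{-1}$, and the operations $\circ_y$, $y\in X$, are pairwise distinct; hence the brace block consists of $|X|$ distinct operations.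
   Context: A skew brace is a triple $(G,\cdot,\circ)$ where $(G,\cdot)$ and $(G,\circ)$ are groups and $g\circ(h\cdot k)=(g\circ h)\cdot g^{-1}\cdot(g\circ k)$ for all $g,h,k$. A bi-skew brace is a triple $(G,\cdot,\circ)$ such that both $(G,\cdot,\circ)$ and $(G,\circ,\cdot)$ are skew braces. A brace block on a set $G$ is a family of group operations on $G$ any two of which form a bi-skew brace. The operation $\circ_y$ does not depend on the choice of lifting since $K$ is central. *)

(* Defs.v *)
(* groups are given as a carrier type with explicit operations
   and axioms, since the groups here are infinite. *)
Set Implicit Arguments.

Section Defs.
Context {T : Type}.

Definition group_laws (mul : T -> T -> T) (one : T) (inv : T -> T) : Prop :=
  (forall a b c, mul a (mul b c) = mul (mul a b) c) /\
  (forall a, mul one a = a /\ mul a one = a) /\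
  (forall a, mul (inv a) a = one /\ mul a (inv a) = one).

Definition is_group_op (mul : T -> T -> T) : Prop :=
  exists one inv, group_laws mul one inv.

Definition skew_brace (dot circ : T -> T -> T) : Prop :=
  is_group_op circ /\
  exists one inv, group_laws dot one inv /\
    forall g h k, circ g (dot h k) = dot (circ g h) (dot (inv g) (circ g k)).

Definition bi_skew_brace (dot circ : T -> T -> T) : Prop :=
  skew_brace dot circ /\ skew_brace circ dot.

Definition brace_block {I : Type} (ops : I -> T -> T -> T) : Prop :=
  (forall i, is_group_op (ops i)) /\
  (forall i j, i <> j -> bi_skew_brace (ops i) (ops j)).

Definition commutator (mul : T -> T -> T) (inv : T -> T) (a b : T) : T :=
  mul (mul (inv a) (inv b)) (mul a b).

Definition nil2 (mul : T -> T -> T) (one : T) (inv : T -> T) : Prop :=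
  forall a b c, commutator mul inv (commutator mul inv a b) c = one.

Inductive comm_subgroup (mul : T -> T -> T) (one : T) (inv : T -> T) : T -> Prop :=
| cs_one : comm_subgroup mul one inv one
| cs_comm a b : comm_subgroup mul one inv (commutator mul inv a b)
| cs_mul a b : comm_subgroup mul one inv a -> comm_subgroup mul one inv b ->
    comm_subgroup mul one inv (mul a b)
| cs_inv a : comm_subgroup mul one inv a -> comm_subgroup mul one inv (inv a).

Definition congr_K mul one inv (g h : T) : Prop :=
  comm_subgroup mul one inv (mul (inv g) h).
End Defs.

Definition is_hom {A B : Type} (mulA : A -> A -> A) (mulB : B -> B -> B)
  (f : A -> B) : Prop := forall a b, f (mulA a b) = mulB (f a) (f b).

Definition free_nil2 {X G : Type} (mul : G -> G -> G) (one : G) (inv : G -> G)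
  (iota : X -> G) : Prop :=
  group_laws mul one inv /\ nil2 mul one inv /\
  forall (H : Type) (mulH : H -> H -> H) (oneH : H) (invH : H -> H),
    group_laws mulH oneH invH -> nil2 mulH oneH invH ->
    forall f : X -> H,
      (exists phi : G -> H, is_hom mul mulH phi /\ forall x, phi (iota x) = f x) /\
      (forall phi1 phi2 : G -> H, is_hom mul mulH phi1 -> is_hom mul mulH phi2 ->
         (forall x, phi1 (iota x) = phi2 (iota x)) -> forall g, phi1 g = phi2 g).

Definition well_order {X : Type} (le : X -> X -> Prop) : Prop :=
  (forall x, le x x) /\
  (forall x y, le x y -> le y x -> x = y) /\
  (forall x y z, le x y -> le y z -> le x z) /\
  (forall x y, le x y \/ le y x) /\
  (forall P : X -> Prop, (exists x, P x) -> exists m, P m /\ forall x, P x -> le m x).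

(* lift : G -> G is a lifting of the endomorphism psi_y of G/K determined by
   psi_y(x0 K) = y K and psi_y(x K) = K for x <> x0; i.e. lift induces a
   well-defined endomorphism of G/K with these values on the generators. *)
Definition lifts_psi {X G : Type} (mul : G -> G -> G) (one : G) (inv : G -> G)
  (iota : X -> G) (x0 y : X) (lift : G -> G) : Prop :=
  (forall g h, congr_K mul one inv g h -> congr_K mul one inv (lift g) (lift h)) /\
  (forall g h, congr_K mul one inv (lift (mul g h)) (mul (lift g) (lift h))) /\
  congr_K mul one inv (lift (iota x0)) (iota y) /\
  (forall x, x <> x0 -> congr_K mul one inv (lift (iota x)) one).

(* Main.v *)
Require Import Defs.
From Stdlib Require Import ClassicalEpsilon FunctionalExtensionality Bool.
Set Implicit Arguments.

Section Grp.
Variables (G : Type) (mul : G -> G -> G) (one : G) (inv : G -> G).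
Hypothesis hg : group_laws mul one inv.
Hypothesis hn : nil2 mul one inv.
Local Infix "·" := mul (at level 40, left associativity).
Local Notation Kc := (comm_subgroup mul one inv).
Local Notation cong := (congr_K mul one inv).

Lemma gA a b c : a · (b · c) = a · b · c.
Proof. apply hg. Qed.
Lemma g1l a : one · a = a.
Proof. apply hg. Qed.
Lemma g1r a : a · one = a.
Proof. apply hg. Qed.
Lemma gVl a : inv a · a = one.
Proof. apply hg. Qed.
Lemma gVr a : a · inv a = one.
Proof. apply hg. Qed.

Lemma gcanl a b c : a · b = a · c -> b = c.
Proof.
  intro E. rewrite <- (g1l b), <- (g1l c), <- (gVl a), <- !gA, E. reflexivity.
Qed.
Lemma gcanr a b c : b · a = c · a -> b = c.
Proof.
  intro E. rewrite <- (g1r b), <- (g1r c), <- (gVr a), !gA, E. reflexivity.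
Qed.
Lemma inv_uniq a b : a · b = one -> b = inv a.
Proof. intro E. apply (@gcanl a). rewrite E, gVr. reflexivity. Qed.
Lemma inv_inv a : inv (inv a) = a.
Proof. symmetry. apply inv_uniq. apply gVl. Qed.
Lemma inv_mul a b : inv (a · b) = inv b · inv a.
Proof.
  symmetry. apply inv_uniq.
  rewrite gA, <- (gA a b), gVr, g1r, gVr. reflexivity.
Qed.

Lemma K_central k : Kc k -> forall c, k · c = c · k.
Proof.
  induction 1 as [| a b | a b Ha IHa Hb IHb | a Ha IHa]; intro c.
  - rewrite g1l, g1r. reflexivity.
  - pose proof (hn a b c) as E. unfold commutator in E |- *.
    set (x := (inv a · inv b · (a · b))) in *.
    apply inv_uniq in E. rewrite inv_mul, !inv_inv in E. exact E.
  - rewrite <- gA, IHb, gA, IHa, gA. reflexivity.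
  - apply (@gcanl a). rewrite !gA, gVr, g1l, (IHa c), <- gA, gVr, g1r. reflexivity.
Qed.

Lemma cong_ex g h : cong g h -> exists k, Kc k /\ h = g · k.
Proof.
  intro H. exists (inv g · h). split; [exact H|]. rewrite gA, gVr, g1l. reflexivity.
Qed.
Lemma cong_of g k : Kc k -> cong g (g · k).
Proof. intro H. unfold congr_K. rewrite gA, gVl, g1l. exact H. Qed.
Lemma cong_refl g : cong g g.
Proof. unfold congr_K. rewrite gVl. constructor. Qed.
Lemma cong_sym g h : cong g h -> cong h g.
Proof.
  intro H. unfold congr_K. apply cs_inv in H. rewrite inv_mul, inv_inv in H. exact H.
Qed.
Lemma cong_mul g g' h h' : cong g g' -> cong h h' -> cong (g · h) (g' · h').
Proof.
  intros H1 H2. destruct (cong_ex H1) as [k1 [K1 E1]]. destruct (cong_ex H2) as [k2 [K2 E2]].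
  subst. replace (g · k1 · (h · k2)) with (g · h · (k1 · k2)).
  - apply cong_of. constructor; assumption.
  - rewrite !gA, <- (gA g k1 h), (K_central K1 h), gA. reflexivity.
Qed.

Definition cj a h := a · h · inv a.

Lemma cj_mul_central a k h : Kc k -> cj (a · k) h = cj a h.
Proof.
  intro H. unfold cj. rewrite inv_mul, <- (gA a k h), (K_central H h), !gA,
    <- (gA _ k), gVr, g1r. reflexivity.
Qed.
Lemma cj_comp a b h : cj a (cj b h) = cj (a · b) h.
Proof. unfold cj. rewrite inv_mul, !gA. reflexivity. Qed.
Lemma cj_hom a h k : cj a (h · k) = cj a h · cj a k.
Proof.
  unfold cj. rewrite !gA, <- (gA _ (inv a) a), gVl, g1r. reflexivity.
Qed.
Lemma ab_ba a b : a · b = b · a · commutator mul inv a b.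
Proof.
  unfold commutator. rewrite !gA, <- (gA b a (inv a)), gVr, g1r, gVr, g1l. reflexivity.
Qed.
Lemma cj_swap a b h : cj a (cj b h) = cj b (cj a h).
Proof.
  rewrite !cj_comp, ab_ba, cj_mul_central; [reflexivity | constructor].
Qed.
Lemma cj_K k h : Kc k -> cj k h = h.
Proof.
  intro H. unfold cj. rewrite (K_central H h), <- gA, gVr, g1r. reflexivity.
Qed.
Lemma cj_cong a h : cong h (cj a h).
Proof.
  unfold congr_K, cj.
  replace (inv h · (a · h · inv a)) with (commutator mul inv h (inv a)) by
    (unfold commutator; rewrite inv_inv, !gA; reflexivity).
  constructor.
Qed.

Definition good_C (C : G -> G -> G) : Prop :=
  (forall g h k, C g (h · k) = C g h · C g k) /\
  (forall g h k, C (g · h) k = C g (C h k)) /\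
  (forall g g' h, cong g g' -> C g h = C g' h) /\
  (forall h, C one h = h) /\
  (forall g h, cong h (C g h)) /\
  (forall g g' h, C g (C g' h) = C g' (C g h)).

Definition oC (C : G -> G -> G) g h := g · C g h.

Lemma C_one C : good_C C -> forall g, C g one = one.
Proof.
  intros [C1 _] g. apply (@gcanl (C g one)). rewrite <- C1, !g1r. reflexivity.
Qed.

Lemma oC_group C : good_C C -> group_laws (oC C) one (fun g => C (inv g) (inv g)).
Proof.
  intro HC. pose proof (C_one HC) as C0.
  destruct HC as [C1 [C2 [C3 [C5 [C6 Cc]]]]]. unfold oC.
  split; [|split].
  - intros a b c. rewrite C1, gA. f_equal.
    rewrite C2. f_equal. apply C3. apply C6.
  - intro a. rewrite C5, g1l, C0, g1r. split; reflexivity.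
  - intro a. split.
    + rewrite (C3 (C (inv a) (inv a)) (inv a) a) by (apply cong_sym, C6).
      rewrite <- C1, gVl. apply C0.
    + rewrite <- C2, gVr, C5, gVr. reflexivity.
Qed.

Lemma oC_skew C D : good_C C -> good_C D ->
  (forall g g' h, C g (D g' h) = D g' (C g h)) -> skew_brace (oC C) (oC D).
Proof.
  intros HC HD Hx. split.
  - exists one, (fun g => D (inv g) (inv g)). apply oC_group; exact HD.
  - exists one, (fun g => C (inv g) (inv g)). split; [apply oC_group; exact HC|].
    pose proof (C_one HC) as C0.
    destruct HC as [C1 [C2 [C3 [C5 [C6 Cc]]]]].
    destruct HD as [D1 [D2 [D3 [D5 [D6 Dc]]]]].
    intros g h k. unfold oC.
    rewrite (C3 (C (inv g) (inv g)) (inv g)) by (apply cong_sym, C6).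
    rewrite <- C1, gA, gVl, g1l.
    rewrite (C3 (g · D g h) (g · h)) by (apply cong_mul; [apply cong_refl | apply cong_sym, D6]).
    rewrite C2, (Cc h (inv g)), <- C2, gVr, C5, Hx, D1, gA. reflexivity.
Qed.

End Grp.

(* Heisenberg group over F_2 *)
Definition HT := (bool * bool * bool)%type.
Definition Hm (p q : HT) : HT :=
  let '(a1, b1, c1) := p in let '(a2, b2, c2) := q in
  (xorb a1 a2, xorb b1 b2, xorb (xorb c1 c2) (andb a1 b2)).
Definition Hi (p : HT) : HT := let '(a, b, c) := p in (a, b, xorb c (andb a b)).
Definition H1 : HT := (false, false, false).

Lemma H_group : group_laws Hm H1 Hi.
Proof.
  split; [|split].
  - intros [[a1 b1] c1] [[a2 b2] c2] [[a3 b3] c3].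
    destruct a1, b1, c1, a2, b2, c2, a3, b3, c3; reflexivity.
  - intros [[a1 b1] c1]; destruct a1, b1, c1; split; reflexivity.
  - intros [[a1 b1] c1]; destruct a1, b1, c1; split; reflexivity.
Qed.
Lemma H_nil2 : nil2 Hm H1 Hi.
Proof.
  intros [[a1 b1] c1] [[a2 b2] c2] [[a3 b3] c3].
  destruct a1, b1, c1, a2, b2, c2, a3, b3, c3; reflexivity.
Qed.
Lemma H_idem x : Hm x x = x -> x = H1.
Proof. destruct x as [[a b] c]; destruct a, b, c; simpl; intro E; try discriminate; reflexivity. Qed.
Lemma H_inv x y : Hm x y = H1 -> y = Hi x.
Proof.
  destruct x as [[a b] c], y as [[d e] f]; destruct a, b, c, d, e, f; simpl; intro E;
  try discriminate; reflexivity.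
Qed.

Theorem mainTheorem12 (X : Type) (le : X -> X -> Prop) (x0 : X)
  (hwo : well_order le) (hx0 : forall x, le x0 x)
  (G : Type) (mul : G -> G -> G) (one : G) (inv : G -> G) (iota : X -> G)
  (hfree : free_nil2 mul one inv iota)
  (lift : X -> G -> G)
  (hlift : forall y, lifts_psi mul one inv iota x0 y (lift y)) :
  let circ := fun (y : X) (g h : G) => mul (mul (mul g (lift y g)) h) (inv (lift y g)) in
  brace_block circ /\
  (forall y, circ y (iota x0) (iota x0) =
             mul (mul (mul (iota x0) (iota y)) (iota x0)) (inv (iota y))) /\
  (forall y z, y <> z -> circ y <> circ z).
Proof.
  destruct hfree as [hg [hn huniv]].
  set (C := fun y g h => cj mul inv (lift y g) h).
  assert (Ecirc : forall y g h, mul (mul (mul g (lift y g)) h) (inv (lift y g))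
                                = oC mul (C y) g h) by
    (intros; unfold oC, C, cj; rewrite !(gA hg); reflexivity).
  assert (HC : forall y, good_C mul one inv (C y)).
  { intro y. destruct (hlift y) as [L1 [L2 [L3 L4]]]. unfold C.
    split; [|split; [|split; [|split; [|split]]]].
    - intros. apply (cj_hom hg).
    - intros g h k. destruct (cong_ex hg (L2 g h)) as [k1 [K1 E1]].
      rewrite (cj_comp hg), E1, (cj_mul_central hg hn); [reflexivity|exact K1].
    - intros g g' h Hc. destruct (cong_ex hg (L1 _ _ Hc)) as [k1 [K1 E1]].
      rewrite E1, (cj_mul_central hg hn); [reflexivity|exact K1].
    - intro h. apply (cj_K hg hn).
      destruct (cong_ex hg (L2 one one)) as [k1 [K1 E1]].
      rewrite (g1l hg) in E1. apply (gcanl hg) in E1. rewrite E1. exact K1.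
    - intros. apply (cj_cong hg).
    - intros. apply (cj_swap hg hn). }
  intro circ.
  assert (Part2 : forall y, circ y (iota x0) (iota x0) =
             mul (mul (mul (iota x0) (iota y)) (iota x0)) (inv (iota y))).
  { intro y. unfold circ. rewrite Ecirc. unfold oC, C.
    destruct (hlift y) as [L1 [L2 [L3 L4]]].
    destruct (cong_ex hg (cong_sym hg L3)) as [k1 [K1 E1]].
    rewrite E1, (cj_mul_central hg hn) by exact K1. unfold cj. rewrite !(gA hg). reflexivity. }
  split; [|split; [exact Part2|]].
  - assert (Ec : circ = fun y => oC mul (C y)).
    { apply functional_extensionality; intro y.
      apply functional_extensionality; intro g.
      apply functional_extensionality; intro h. apply Ecirc. }
    rewrite Ec. split.
    + intro i. eexists; eexists. apply oC_group; [exact hg | apply HC].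
    + intros i j _. split; apply (oC_skew hg hn); try apply HC; intros; apply (cj_swap hg hn).
  -
    assert (Key : forall w v, w <> x0 -> v <> w ->
               cj mul inv (iota w) (iota x0) <> cj mul inv (iota v) (iota x0)).
    { intros w v Hw Hv E.
      set (f := fun x => if excluded_middle_informative (x = w) then (false, true, false)
                         else if excluded_middle_informative (x = x0) then (true, false, false)
                         else H1).
      destruct (huniv HT Hm H1 Hi H_group H_nil2 f) as [[phi [Hphi Hf]] _].
      assert (Pinv : forall a, phi (inv a) = Hi (phi a)).
      { intro a. apply H_inv.
        assert (P1 : phi one = H1).
        { apply H_idem. rewrite <- Hphi, (g1l hg). reflexivity. }
        rewrite <- Hphi, (gVr hg). exact P1. }
      apply (f_equal phi) in E. unfold cj in E.
      rewrite !Hphi, !Pinv, !Hf in E. unfold f in E.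
      destruct (excluded_middle_informative (w = w)) as [_|n]; [|congruence].
      destruct (excluded_middle_informative (x0 = w)) as [e|_]; [congruence|].
      destruct (excluded_middle_informative (x0 = x0)) as [_|n]; [|congruence].
      destruct (excluded_middle_informative (v = w)) as [e|_]; [congruence|].
      destruct (excluded_middle_informative (v = x0)); simpl in E; discriminate. }
    intros y z Hyz E.
    assert (E2 := Part2 y). rewrite E, Part2 in E2.
    rewrite <- !(gA hg) in E2. apply (gcanl hg) in E2.
    assert (E3 : cj mul inv (iota z) (iota x0) = cj mul inv (iota y) (iota x0))
      by (unfold cj; rewrite <- !(gA hg); exact E2).
    destruct (excluded_middle_informative (y = x0)) as [ey|ny].
    + apply (Key z y); [congruence | congruence | exact E3].
    + apply (Key y z); [exact ny | congruence | symmetry; exact E3].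
Qed.
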